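(* Let $X$ be a finite set, let $F_X,F'_X$ be filtrations over $X$ and let $C_X=\Phi(F_X)$, $C'_X=\Phi(F'_X)$ be their facegrams. Then $d_{\mathrm{I}}(C_X,C'_X)=d_{\mathrm{I}}(F_X,F'_X)$.
   Context: $\mathbf{pow}(X)$ is the set of nonempty subsets of $X$; a filtration is an order-preserving map $F_X:(\mathbf{pow}(X),\subset)\to(\mathbb{R},\leq)$. A face-set of $X$ is a family of pairwise inclusion-incomparable nonempty subsets of $X$, ordered by $\mathcal{S}\leq\mathcal{S}'$ iff each face of $\mathcal{S}$ is contained in a face of $\mathcal{S}'$. The facegram of $F_X$ is $\Phi(F_X)(t):=$ the set of inclusion-maximal elements of $\{\sigma\in\mathbf{pow}(X)\mid F_X(\sigma)\leq t\}$. Interleaving distances: $d_{\mathrm{I}}(C_X,C'_X):=\inf\{\varepsilon\geq0\mid C_X(t)\leq C'_X(t+\varepsilon)\text{ and }C'_X(t)\leq C_X(t+\varepsilon)\ \forall t\in\mathbb{R}\}$ and $d_{\mathrm{I}}(F_X,F'_X):=\max_{\sigma\in\mathbf{pow}(X)}|F_X(\sigma)-F'_X(\sigma)|$. *)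

(* Defs.v *)
From HB Require Import structures.
From mathcomp Require Import all_boot all_order all_algebra.
From mathcomp Require Import boolp classical_sets reals.
Set Implicit Arguments. Unset Strict Implicit. Unset Printing Implicit Defensive.
Import Order.TTheory GRing.Theory Num.Theory.
Local Open Scope ring_scope.

(* pow(X) = nonempty subsets of X; a filtration is a function on {set X}
   that is order preserving on nonempty subsets (its value on set0 is
   irrelevant, set0 is not in pow(X)). *)
Definition is_filtration (R : realType) (X : finType) (F : {set X} -> R) : Prop :=
  forall s t : {set X}, s != finset.set0 -> t != finset.set0 -> s \subset t -> F s <= F t.

Definition faceset_le (X : finType) (S S' : {set {set X}}) : bool :=
  [forall s in S, exists t in S', s \subset t].

Definition facegram (R : realType) (X : finType) (F : {set X} -> R) (t : R)
  : {set {set X}} :=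
  [set s : {set X} | [&& s != finset.set0, F s <= t &
     [forall u : {set X}, ((u != finset.set0) && (F u <= t)) ==> ~~ (s \proper u)]]].

Definition dI_facegram (R : realType) (X : finType)
  (C C' : R -> {set {set X}}) : R :=
  inf [set e : R | 0 <= e /\
        (forall t : R, faceset_le (C t) (C' (t + e)) /\
                       faceset_le (C' t) (C (t + e)))]%classic.

(* interleaving distance of filtrations: max over nonempty sigma
   (0 if X is empty, the empty maximum of nonnegative numbers). *)
Definition dI_filtration (R : realType) (X : finType) (F F' : {set X} -> R) : R :=
  \big[Num.max/0]_(s : {set X} | s != finset.set0) `|F s - F' s|.

(* Main.v *)
Require Import Defs.
From HB Require Import structures.
From mathcomp Require Import all_boot all_order all_algebra.
From mathcomp Require Import boolp classical_sets reals.
Set Implicit Arguments. Unset Strict Implicit. Unset Printing Implicit Defensive.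
Import Order.TTheory GRing.Theory Num.Theory.
Local Open Scope ring_scope.

Lemma exists_max_face (R : realType) (X : finType) (G : {set X} -> R) (t : R)
  (s : {set X}) : s != finset.set0 -> G s <= t ->
  exists2 m, m \in facegram G t & s \subset m.
Proof.
move=> sn0 Gs.
pose P := fun u : {set X} => [&& u != finset.set0, G u <= t & s \subset u].
have Ps : P s by rewrite /P sn0 Gs subxx.
case: (@arg_maxnP _ s P (fun u => #|u|) Ps) => m /and3P[mn0 Gm sm] mmax.
exists m => //; rewrite inE mn0 Gm /=; apply/forallP => u; apply/implyP.
move=> /andP[un0 Gu]; apply/negP => pmu.
have Pu : P u by rewrite /P un0 Gu (fintype.subset_trans sm (proper_sub pmu)).
by have := leq_trans (proper_card pmu) (mmax u Pu); rewrite ltnn.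
Qed.

Lemma in_facegram (R : realType) (X : finType) (G : {set X} -> R) (t : R) m :
  m \in facegram G t -> m != finset.set0 /\ G m <= t.
Proof. by rewrite inE => /and3P[]. Qed.

Lemma fs_le_iff (R : realType) (X : finType) (F F' : {set X} -> R)
  (hF' : is_filtration F') (e : R) :
  (forall t, faceset_le (facegram F t) (facegram F' (t + e))) <->
  (forall s : {set X}, s != finset.set0 -> F' s <= F s + e).
Proof.
split.
- move=> H s sn0.
  have [m mC sm] := exists_max_face sn0 (lexx (F s)).
  have /forall_inP/(_ m mC)/exists_inP[m' m'C mm'] := H (F s).
  have [m'n0 Hm'] := in_facegram m'C.
  apply: le_trans Hm'; apply: hF' => //; exact: fintype.subset_trans sm mm'.
- move=> H t; apply/forall_inP => m mC.
  have [mn0 Fm] := in_facegram mC.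
  have Hm : F' m <= t + e by apply: le_trans (H m mn0) _; rewrite lerD2r.
  have [m' m'C mm'] := exists_max_face mn0 Hm.
  by apply/exists_inP; exists m'.
Qed.

Theorem mainTheorem8 (R : realType) (X : finType) (F F' : {set X} -> R)
  (hF : is_filtration F) (hF' : is_filtration F') :
  dI_facegram (facegram F) (facegram F') = dI_filtration F F'.
Proof.
rewrite /dI_facegram /dI_filtration.
set d := \big[Num.max/0]_(s | s != finset.set0) `|F s - F' s|.
set S := [set e | _]%classic.
have d0 : 0 <= d by rewrite /d; elim/big_ind: _ => // x y; rewrite le_max => ->.
have dge : forall s : {set X}, s != finset.set0 -> `|F s - F' s| <= d.
  by move=> s sn0; rewrite /d (bigD1 s) //= le_max lexx.
have SP : forall e, S e <-> d <= e.
  move=> e; rewrite /S /=; split.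
  - move=> [e0 H].
    have H1 : forall t, faceset_le (facegram F t) (facegram F' (t + e)) by move=> t; case: (H t).
    have H2 : forall t, faceset_le (facegram F' t) (facegram F (t + e)) by move=> t; case: (H t).
    move: H1 H2 => /(fs_le_iff _ hF') H1 /(fs_le_iff _ hF) H2.
    rewrite /d; apply: bigmax_le => // s sn0.
    rewrite ler_norml; apply/andP; split.
    + by rewrite lerNl opprB lerBlDr addrC H1.
    + by rewrite lerBlDr addrC H2.
  - move=> de; split; first exact: le_trans de.
    have H1 : forall s : {set X}, s != finset.set0 -> F' s <= F s + e.
      move=> s sn0; have := le_trans (dge s sn0) de.
      by rewrite ler_norml => /andP[+ _]; rewrite lerNl opprB lerBlDr addrC.
    have H2 : forall s : {set X}, s != finset.set0 -> F s <= F' s + e.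
      move=> s sn0; have := le_trans (dge s sn0) de.
      by rewrite ler_norml => /andP[_]; rewrite lerBlDr addrC.
    move: H1 H2 => /(fs_le_iff _ hF') H1 /(fs_le_iff _ hF) H2.
    by move=> t; split.
have Sd : S d by apply/SP.
have lb : lbound S d by move=> e /SP.
apply/le_anti/andP; split.
- by apply: ge_inf => //; exists d.
- by apply: lb_le_inf => //; exists d.
Qed.
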